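(* Let $k,l\geq 1$ be integers, $n=2^k$ and $m=2^l$. For the Ducci map $D:\mathbb{Z}_m^n\to\mathbb{Z}_m^n$, we have $L_m(n)=(l+1)2^{k-1}$ and $P_m(n)=1$.
   Context: For integers $m\ge 2$, $n\ge 2$, the Ducci function $D:\mathbb{Z}_m^n\to\mathbb{Z}_m^n$ is $D(x_1,\dots,x_n)=(x_1+x_2 \bmod m, x_2+x_3\bmod m,\dots,x_n+x_1\bmod m)$. For $\mathbf{u}\in\mathbb{Z}_m^n$, $Len(\mathbf{u})$ is the smallest integer $\alpha\ge 0$ such that there exists an integer $\beta\ge 1$ with $D^{\alpha+\beta}(\mathbf{u})=D^{\alpha}(\mathbf{u})$, and $Per(\mathbf{u})$ is the smallest integer $\beta\geq 1$ such that $D^{Len(\mathbf{u})+\beta}(\mathbf{u})=D^{Len(\mathbf{u})}(\mathbf{u})$. Define $L_m(n)=Len(0,0,\dots,0,1)$ and $P_m(n)=Per(0,0,\dots,0,1)$, where $(0,\dots,0,1)\in\mathbb{Z}_m^n$. *)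

(* Defs.v *)
From mathcomp Require Import all_boot all_algebra.
Set Implicit Arguments. Unset Strict Implicit. Unset Printing Implicit Defensive.

(* Elements of Z_m^n are represented as finite functions 'I_n -> 'Z_m
   (with 'Z_m the ring Z/mZ; the theorem only uses m >= 2). *)
Definition ducci (m n : nat) (x : {ffun 'I_n -> 'Z_m}) : {ffun 'I_n -> 'Z_m} :=
  [ffun i : 'I_n => (x i + x (ordS i))%R].

Definition ducci_iter (m n j : nat) (u : {ffun 'I_n -> 'Z_m}) := iter j (@ducci m n) u.

Definition periodic_from (m n : nat) (u : {ffun 'I_n -> 'Z_m}) (a b : nat) : Prop :=
  ducci_iter (a + b) u = ducci_iter a u.

Definition IsLen (m n : nat) (u : {ffun 'I_n -> 'Z_m}) (a : nat) : Prop :=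
  (exists b, 1 <= b /\ periodic_from u a b) /\
  (forall a', (exists b, 1 <= b /\ periodic_from u a' b) -> a <= a').

Definition IsPer (m n : nat) (u : {ffun 'I_n -> 'Z_m}) (b : nat) : Prop :=
  exists a, IsLen u a /\ 1 <= b /\ periodic_from u a b /\
    (forall b', 1 <= b' -> periodic_from u a b' -> b <= b').

Definition e_last (m n : nat) : {ffun 'I_n -> 'Z_m} :=
  [ffun i : 'I_n => if (i : nat) == n.-1 then 1%R else 0%R].

(* Main.v *)
Require Import Defs.
From mathcomp Require Import all_boot all_algebra.
From mathcomp Require Import ring zify.
Set Implicit Arguments. Unset Strict Implicit. Unset Printing Implicit Defensive.
Import GRing.Theory.
Local Open Scope ring_scope.

Lemma bin2pow (T : comRingType) (x : T) s :
  exists B : T, (1 + x) ^+ (2 ^ s) = 1 + x ^+ (2 ^ s) + 2 * B.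
Proof.
elim: s => [|s [B IH]]; first by exists 0; rewrite expn0 !expr1 mulr0 addr0.
exists (x ^+ (2 ^ s) + 2 * B * (1 + x ^+ (2 ^ s)) + 2 * B ^+ 2).
rewrite expnS mul2n -addnn !exprD IH; ring.
Qed.

Lemma Fj (T : comRingType) (t A : T) j :
  exists r : T, (1 + t + 2 * A) ^+ j.+1 =
    2 ^+ j.+1 * A ^+ j.+1 + 2 ^+ j * (1 + t) * ((1 + A) ^+ j.+1 - A ^+ j.+1)
    + r * (t ^+ 2 - 1).
Proof.
elim: j => [|j [r IH]]; first by exists 0; ring.
exists (r * (1 + t + 2 * A) + 2 ^+ j * ((1 + A) ^+ j.+1 - A ^+ j.+1)).
rewrite exprS IH.
set c := 2 ^+ j. set a := (1 + A) ^+ j. set b := A ^+ j.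
have -> : 2 ^+ j.+2 = c * 2 * 2 :> T by rewrite /c !exprS; ring.
have -> : 2 ^+ j.+1 = c * 2 :> T by rewrite /c !exprS; ring.
rewrite !(exprS (1 + A)) !(exprS A) -/a -/b.
ring.
Qed.






Section Mx.
Variable R : comNzRingType.
Variable n' : nat.
Local Notation n := n'.+1.

Definition Smx : 'M[R]_n := \matrix_(i, j) ((i == ordS j)%:R).

Lemma Spow t (i j : 'I_n) : (Smx ^+ t) i j = (((j + t) %% n)%N == i)%:R.
Proof.
elim: t i j => [|t IH] i j.
  by rewrite expr0 mxE addn0 modn_small // eq_sym.
rewrite exprSr -mulmxE mxE (bigD1 (ordS j)) //= big1 ?addr0.
  rewrite IH mxE eqxx mulr1 /= modnDml addSnnS //.
move=> r /negPf Hr; rewrite mxE Hr mulr0 //.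
Qed.

Lemma Sn : Smx ^+ n = 1.
Proof.
apply/matrixP => i j; rewrite Spow mxE modnDr modn_small //.
by rewrite eq_sym.
Qed.

Lemma horner_diag (q : {poly R}) (i : 'I_n) : (size q <= n)%N ->
  (horner_mx Smx q) i i = q`_0.
Proof.
move=> Hs.
have -> : horner_mx Smx q = \sum_(t < size q) q`_t *: Smx ^+ t.
  rewrite -{1}[q]coefK poly_def rmorph_sum; apply: eq_bigr => t _.
  rewrite -mul_polyC rmorphM /= horner_mx_C rmorphXn /= horner_mx_X.
  by rewrite -mulmxE mul_scalar_mx.
rewrite (@summxE _ n n).
case Hq: (size q) Hs => [|s] Hs.
  by rewrite big_ord0 nth_default ?Hq.
rewrite (bigD1 ord0) //= big1 ?addr0.
  by rewrite mxE Spow addn0 modn_small // eqxx mulr1.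
move=> t Ht; rewrite mxE Spow.
have -> : (((i + t) %% n)%N == i) = false.
  apply/negP => /eqP H.
  have : (i + t == i + 0 %[mod n])%N by rewrite addn0 H modn_small.
  rewrite eqn_modDl mod0n modn_small; last by apply: leq_trans Hs.
  by move=> /eqP Ht0; move: Ht; rewrite -val_eqE /= Ht0.
by rewrite mulr0.
Qed.
End Mx.

Section D.
Variables m n' : nat.
Local Notation n := n'.+1.
Local Notation S := (Smx 'Z_m n').

Definition rv (u : {ffun 'I_n -> 'Z_m}) : 'rV['Z_m]_n := \row_j u j.

Lemma rv_inj : injective rv.
Proof. move=> u v H; apply/ffunP => j; move/rowP: H => /(_ j); rewrite !mxE //. Qed.

Lemma rv_ducci u : rv (@ducci m n u) = rv u *m (1 + S).
Proof.
apply/rowP => j; rewrite mulmxDr mulmx1 !mxE ffunE; congr (_ + _).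
rewrite (bigD1 (ordS j)) //= big1 ?addr0.
  by rewrite !mxE eqxx mulr1.
by move=> r /negPf Hr; rewrite !mxE Hr mulr0.
Qed.

Lemma rv_iter j u : rv (@ducci_iter m n j u) = rv u *m (1 + S) ^+ j.
Proof.
elim: j => [|j IH]; first by rewrite expr0 mulmx1.
by rewrite /ducci_iter iterS -/(ducci_iter j u) rv_ducci IH exprSr -mulmxE mulmxA.
Qed.
End D.

Lemma two_pow_l l : (0 < l)%N -> (2 : 'Z_(2 ^ l)) ^+ l = 0.
Proof.
move=> Hl; rewrite -natrX Zp_nat; apply/val_inj => /=.
rewrite Zp_cast ?modnn //.
by rewrite -{1}(expn0 2) ltn_exp2l.
Qed.

Lemma main_core (n' l' h s : nat) : n'.+1 = (2 * h)%N -> h = (2 ^ s)%N ->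
  let m := (2 ^ l'.+1)%N in
  let e := e_last m n'.+1 in
  (forall i, ducci_iter ((l'.+2) * h) e i = 0) /\
  ducci_iter ((l'.+1) * h + h.-1) e ord_max != 0.
Proof.
move=> Hn Hh m e.
have hpos : (0 < h)%N by rewrite Hh expn_gt0.
pose P := {poly 'Z_m}.
pose phi := horner_mx (Smx 'Z_m n').
have [A HA] := bin2pow ('X : P) s.
rewrite -Hh in HA.
set t : P := 'X^h in HA.
pose Z : P := t ^+ 2 - 1.
have phiZ : phi Z = 0.
  rewrite /phi /Z rmorphB rmorph1 rmorphXn /= /t rmorphXn /= horner_mx_X -exprM.
  by rewrite mulnC -Hn Sn subrr.
have two0 : (2 : P) ^+ l'.+1 = 0.
  have -> : (2 : P) = (2 : 'Z_m)%:P by rewrite rmorph_nat.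
  by rewrite -rmorphXn /= two_pow_l // rmorph0.
have phiy : phi (1 + 'X) = 1 + Smx 'Z_m n'.
  by rewrite /phi rmorphD rmorph1 /= horner_mx_X.
have rvD j : rv (ducci_iter j e) = rv e *m phi ((1 + 'X) ^+ j).
  by rewrite rv_iter /phi rmorphXn /= -/phi phiy.
split.
  have [r Hr] := Fj t A l'.+1.
  have Hy : (1 + 'X : P) ^+ (l'.+2 * h) = r * Z.
    by rewrite mulnC exprM HA Hr exprS two0 !(mul0r, mulr0, add0r, addr0).
  move=> i.
  have := rvD (l'.+2 * h)%N; rewrite Hy /phi rmorphM /= -/phi phiZ mulr0 mulmx0.
  by move/rowP => /(_ i); rewrite !mxE.
have [r Hr] := Fj t A l'.
set G := (1 + A) ^+ l'.+1 - A ^+ l'.+1 in Hr.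
have [q Hq] : exists q, G = (G.[1])%:P + q * ('X - 1).
  have : root (G - (G.[1])%:P) 1 by rewrite rootE hornerD hornerN hornerC subrr.
  move/factor_theorem => [q Hq]; exists q; rewrite -Hq addrC subrK //.
set u : P := (1 + 'X) ^+ h.-1.
have Huy : u * (1 + 'X) = 1 + t + 2 * A by rewrite -exprSr prednK.
set c2 : P := 2 ^+ l'.
have c20 : c2 * 2 = 0 by rewrite -exprSr two0.
set Gc := G.[1].
have Hy : (1 + 'X : P) ^+ (l'.+1 * h + h.-1) =
   (c2 * Gc%:P) * (u * (1 + t)) + Z * (c2 * q + u * r).
  rewrite exprD mulnC exprM HA mulrC -/u Hr Hq.
  set Al := A ^+ l'.+1.
  have E : u * (2 ^+ l'.+1 * Al + c2 * (1 + t) * (Gc%:P + q * ('X - 1)) + r * (t ^+ 2 - 1))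
     = c2 * Gc%:P * (u * (1 + t)) + Z * (c2 * q + u * r)
       + c2 * 2 * (u * Al + q * (1 + t) * (1 - u + A))
       + c2 * q * (1 + t) * (u * (1 + 'X) - (1 + t + 2 * A)).
    rewrite /c2 /Z exprS; ring.
  by rewrite E Huy subrr mulr0 c20 mul0r !addr0.
have Hc2 : c2 * Gc%:P = (2 ^+ l' * Gc)%:P.
  by rewrite rmorphM rmorphXn /= rmorph_nat.
rewrite Hc2 in Hy.
have Hsz : (size ((2 ^+ l' * Gc)%:P * (u * (1 + t)))%R <= n'.+1)%N.
  apply: (leq_trans (size_polyMleq _ _)).
  have H1 := size_polyC_leq1 (2 ^+ l' * Gc).
  have H2 : (size u <= h)%N.
    apply: (leq_trans (size_poly_exp_leq _ _)).
    rewrite addrC size_XaddC /= mul1n prednK //.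
  have H3 : (size (1 + t)%R <= h.+1)%N by rewrite addrC /t -polyC1 size_XnaddC.
  have H4 := size_polyMleq u (1 + t).
  rewrite Hn.
  move: H1 H2 H3 H4; set a := size _; set b := size u; set c := size (1 + t)%R; set d := size _.
  move=> H1 H2 H3 H4; lia.
have Hc : (rv (ducci_iter (l'.+1 * h + h.-1) e)) 0 ord_max = 2 ^+ l' * Gc.
  rewrite rvD Hy /phi rmorphD [X in _ + X]rmorphM /= -/phi phiZ mul0r addr0.
  rewrite mxE (bigD1 ord_max) //= big1 ?addr0.
    rewrite mxE /e /e_last ffunE /= eqxx mul1r horner_diag //.
    rewrite coefCM -horner_coef0 /u /t !hornerE expr0n /= (gtn_eqF hpos) addr0 expr1n !mulr1 //.
  move=> j Hj; rewrite mxE /e /e_last ffunE /=.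
  have -> : (j == n' :> nat) = false by apply/negbTE; move: Hj; apply: contra => /eqP H; apply/eqP/val_inj.
  by rewrite mul0r.
move: Hc; rewrite /rv mxE => ->.
have HG : Gc = (1 + A.[1]) ^+ l'.+1 - A.[1] ^+ l'.+1 by rewrite /Gc /G !hornerE.
rewrite HG -[A.[1]]natr_Zp.
set v : nat := nat_of_ord A.[1].
have Hle : (v ^ l'.+1 <= (1 + v) ^ l'.+1)%N by rewrite leq_exp2r // leq_addl.
have -> : (2 : 'Z_m) ^+ l' * ((1 + v%:R) ^+ l'.+1 - v%:R ^+ l'.+1) =
   (2 ^ l' * ((1 + v) ^ l'.+1 - v ^ l'.+1))%:R.
  by rewrite natrM natrB // !natrX natrD.
set o := ((1 + v) ^ l'.+1 - v ^ l'.+1)%N.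
have oodd : odd o by rewrite /o oddB // !oddX /= oddD /=; case: (odd v).
rewrite Zp_nat; apply/eqP => /(congr1 val) /=.
rewrite Zp_cast; last by rewrite /m -{1}(expn0 2) ltn_exp2l.
rewrite /m expnS [(2 * _)%N]mulnC -muln_modr modn2 oodd muln1 => /eqP.
by rewrite expn_eq0.
Qed.

Section Logic.
Variables m n : nat.
Implicit Types x u : {ffun 'I_n -> 'Z_m}.

Lemma zero_iter x c : (forall i, x i = 0) -> forall i, iter c (@ducci m n) x i = 0.
Proof.
move=> Hx; elim: c => [|c IH] i //=.
by rewrite /ducci ffunE !IH addr0.
Qed.

Lemma iter_shift u a c : ducci_iter (c + a) u = iter c (@ducci m n) (ducci_iter a u).
Proof. by rewrite /ducci_iter iterD. Qed.

Lemma logic u L' i0 : (forall i, ducci_iter L'.+1 u i = 0) -> ducci_iter L' u i0 != 0 ->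
  IsLen u L'.+1 /\ IsPer u 1.
Proof.
move=> H0 H1.
have per1 : periodic_from u L'.+1 1.
  rewrite /periodic_from addn1; apply/ffunP => i.
  by rewrite /ducci_iter iterS -/(ducci_iter L'.+1 u) /ducci ffunE !H0 addr0.
have HL : IsLen u L'.+1.
  split; first by exists 1%N.
  move=> a [b [Hb Hp]].
  rewrite leqNgt; apply/negP => Ha.
  have per : forall t, ducci_iter (a + t * b) u = ducci_iter a u.
    elim=> [|t IH]; first by rewrite mul0n addn0.
    have -> : (a + t.+1 * b = t * b + (a + b))%N by rewrite mulSn; lia.
    by rewrite iter_shift Hp -iter_shift addnC IH.
  have Z : forall i, ducci_iter a u i = 0.
    move=> i; rewrite -(per L'.+1).
    have -> : (a + L'.+1 * b = (a + L'.+1 * b - L'.+1) + L'.+1)%N.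
      by rewrite subnK // (leq_trans _ (leq_addl _ _)) // leq_pmulr.
    by rewrite iter_shift zero_iter.
  move: H1; have -> : L' = ((L' - a) + a)%N by rewrite subnK // -ltnS.
  by rewrite iter_shift zero_iter ?eqxx.
split=> //; exists L'.+1; split=> //; split=> //; split=> //.
Qed.
End Logic.

Local Close Scope ring_scope.

Theorem theorem1p2 (k l : nat) : 1 <= k -> 1 <= l ->
  IsLen (e_last (2 ^ l) (2 ^ k)) ((l + 1) * 2 ^ (k - 1)) /\
  IsPer (e_last (2 ^ l) (2 ^ k)) 1.
Proof.
move=> Hk Hl.
case: k Hk => [//|k'] _. case: l Hl => [//|l'] _.
rewrite subn1 /= (expnS 2 k').
have Hn : (2 * 2 ^ k')%N = ((2 * 2 ^ k').-1).+1 by move: (expn_gt0 2 k'); lia.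
rewrite Hn.
set N := (2 * 2 ^ k').-1 in Hn *.
have [H0 H1] := @main_core N l' (2 ^ k') k' (esym Hn) erefl.
have hpos : (0 < 2 ^ k')%N by rewrite expn_gt0.
have E : ((l'.+1 + 1) * 2 ^ k' = (l'.+1 * 2 ^ k' + (2 ^ k').-1).+1)%N.
  by move: hpos; lia.
have E2 : (l'.+2 * 2 ^ k' = (l'.+1 * 2 ^ k' + (2 ^ k').-1).+1)%N by rewrite -E addn1.
rewrite E2 in H0; rewrite E.
exact: logic H0 H1.
Qed.
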